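(* In a hierarchical tensor factorization with mode tree $\mathcal T$, for any $\nu\in\mathrm{int}(\mathcal T)$: $$\|\mathcal W^{(\nu,:)}\|\le\|W^{(\nu)}\|\cdot\prod_{\nu_c\in C(\nu)}\|\mathcal W^{(\nu_c,:)}\|.$$
   Context: Fix $N\in\mathbb N$, $D_1,\dots,D_N\in\mathbb N$; $[K]:=\{1,\dots,K\}$; norms are Frobenius norms; $\otimes$ the tensor product. A mode tree $\mathcal T$ over $[N]$ is a rooted tree whose nodes are labeled by subsets of $[N]$, with exactly $N$ leaves labeled $\{1\},\dots,\{N\}$, and where each interior node's label is the union of its children's labels; nodes are identified with labels, root $[N]$, $\mathrm{int}(\mathcal T)$ interior nodes, $Pa(\nu)$ parent, $C(\nu)$ children (fixed order). A hierarchical tensor factorization has $R_\nu\in\mathbb N$ ($\nu\in\mathrm{int}(\mathcal T)$), $R_{Pa([N])}:=1$, $R_{\{n\}}:=D_n$, weight matrices $W^{(\nu)}\in\mathbb R^{R_\nu\times R_{Pa(\nu)}}$. Intermediate tensors: $\mathcal W^{(\{n\},r)}:=W^{(\{n\})}_{:,r}$; for $\nu\in\mathrm{int}(\mathcal T)\setminus\{[N]\}$ (leaves to root), $r\in[R_{Pa(\nu)}]$: $\mathcal W^{(\nu,r)}:=\pi_\nu\big(\sum_{r'=1}^{R_\nu}W^{(\nu)}_{r',r}\bigotimes_{\nu_c\in C(\nu)}\mathcal W^{(\nu_c,r')}\big)$; end tensor $\mathcal W_H:=\pi_{[N]}\big(\sum_{r'=1}^{R_{[N]}}W^{([N])}_{r',1}\bigotimes_{\nu_c\in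 C([N])}\mathcal W^{(\nu_c,r')}\big)$, where $\pi_\nu$ permutes modes (ordered by children, each child's elements ascending) into ascending order of the elements of $\nu$; by convention $\mathcal W^{([N],1)}:=\mathcal W_H$. For $\nu\in\mathcal T$, $\mathcal W^{(\nu,:)}$ is the tensor obtained by stacking $(\mathcal W^{(\nu,r)})_{r=1}^{R_{Pa(\nu)}}$ along an additional last mode, i.e. $\mathcal W^{(\nu,:)}_{:,\dots,:,r}=\mathcal W^{(\nu,r)}$. *)

(* Defs.v *)
From HB Require Import structures.
From mathcomp Require Import all_boot all_order all_algebra.
From mathcomp Require Import reals.
From Stdlib Require List.

Set Implicit Arguments.
Unset Strict Implicit.
Unset Printing Implicit Defensive.

Import Order.TTheory GRing.Theory Num.Theory.
Local Open Scope ring_scope.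

(* Modes are 'I_N (mode n+1 of the paper is the ordinal n). *)
Section ModeTree.
Variable N : nat.

Inductive mtree := MLeaf of 'I_N | MNode of seq mtree.

Fixpoint label (t : mtree) : {set 'I_N} :=
  match t with
  | MLeaf n => [set n]
  | MNode cs =>
      (fix labs (cs : seq mtree) : {set 'I_N} :=
         match cs with [::] => set0 | c :: cs' => label c :|: labs cs' end) cs
  end.

Definition children (t : mtree) : seq mtree :=
  match t with MLeaf _ => [::] | MNode cs => cs end.

Definition is_interior (t : mtree) : bool :=
  match t with MLeaf _ => false | MNode _ => true end.

Fixpoint leaves (t : mtree) : seq 'I_N :=
  match t with
  | MLeaf n => [:: n]
  | MNode cs =>
      (fix ls (cs : seq mtree) : seq 'I_N :=
         match cs with [::] => [::] | c :: cs' => leaves c ++ ls cs' end) cs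
  end.

Fixpoint subtrees (t : mtree) : seq mtree :=
  t :: match t with
       | MLeaf _ => [::]
       | MNode cs =>
           (fix ss (cs : seq mtree) : seq mtree :=
              match cs with [::] => [::] | c :: cs' => subtrees c ++ ss cs' end) cs
       end.

(* A mode tree over [N]: exactly N leaves, labelled {1},...,{N} (each once);
   interior nodes have at least one child; nodes are identified with their
   labels (labels are pairwise distinct). *)
Definition is_mode_tree (T : mtree) : Prop :=
  [/\ perm_eq (leaves T) (enum 'I_N),
      (forall t, List.In t (subtrees T) -> is_interior t -> children t <> [::])
    & uniq (map label (subtrees T))].

Section Factorization.
Variable R : realType.
(* D n = D_{n+1}; Rk nu = R_nu for interior nu; W nu = W^{(nu)}, as a
   0-indexed array: W nu r' r is the entry (r'+1, r+1). *)
Variables (D : 'I_N -> nat) (Rk : {set 'I_N} -> nat)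
          (W : {set 'I_N} -> nat -> nat -> R).

Definition rank (t : mtree) : nat :=
  match t with MLeaf n => D n | MNode _ => Rk (label t) end.

(* all nodes together with R_{Pa(nu)} (R_{Pa([N])} := 1) *)
Fixpoint nodes_pa (t : mtree) (p : nat) : seq (mtree * nat) :=
  (t, p) :: match t with
            | MLeaf _ => [::]
            | MNode cs =>
                (fix ns (cs : seq mtree) : seq (mtree * nat) :=
                   match cs with
                   | [::] => [::]
                   | c :: cs' => nodes_pa c (Rk (label t)) ++ ns cs'
                   end) cs
            end.

Definition nodes (T : mtree) : seq (mtree * nat) := nodes_pa T 1.

(* A tensor whose modes are
   the elements of nu is represented with modes labelled by their names:
   it is a function of a multi-index i : 'I_N -> nat, of which only the
   coordinates i n, n \in nu, are read.  Thus the mode permutation pi_nu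
   (which only sorts the modes into ascending order) is the identity in
   this representation. *)
Fixpoint tens (t : mtree) : ('I_N -> nat) -> nat -> R :=
  match t with
  | MLeaf n => fun i r => W [set n] (i n) r
  | MNode cs => fun i r =>
      \sum_(r' < Rk (label t))
        W (label t) r' r *
        (fix pr (cs : seq mtree) : R :=
           match cs with [::] => 1 | c :: cs' => tens c i r' * pr cs' end) cs
  end.

Definition idx (nu : {set 'I_N}) :=
  {dffun forall x : {x : 'I_N | x \in nu}, 'I_(D (val x))}.

Definition ext (nu : {set 'I_N}) (j : idx nu) : 'I_N -> nat :=
  fun n => match (insub n : option {x : 'I_N | x \in nu}) with
           | Some x => nat_of_ord (j x)
           | None => 0%N
           end.

Definition stack_norm (nu : {set 'I_N}) (K : nat)
  (X : ('I_N -> nat) -> nat -> R) : R :=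
  Num.sqrt (\sum_(j : idx nu) \sum_(r < K) X (ext j) r ^+ 2).

Definition mat_norm (m k : nat) (M : nat -> nat -> R) : R :=
  Num.sqrt (\sum_(a < m) \sum_(b < k) M a b ^+ 2).

End Factorization.
End ModeTree.

(* Main.v *)
Require Import Defs.
From HB Require Import structures.
From mathcomp Require Import all_boot all_order all_algebra.
From mathcomp Require Import reals.
From mathcomp Require Import ring lra.
From Stdlib Require List.
Import Order.TTheory GRing.Theory Num.Theory.
Local Open Scope ring_scope.
Set Implicit Arguments.
Unset Strict Implicit.

Fixpoint mtree_ind' (N : nat) (P : mtree N -> Prop) (HL : forall n, P (MLeaf n))
  (HN : forall cs, (forall c, List.In c cs -> P c) -> P (MNode cs)) (t : mtree N) : P t :=
  match t with
  | MLeaf n => HL n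
  | MNode cs => HN cs ((fix F (cs : seq (mtree N)) : forall c, List.In c cs -> P c :=
       match cs with
       | [::] => fun c H => False_ind _ H
       | c0 :: cs' => fun c H => match H with
                     | or_introl e => eq_ind c0 P (mtree_ind' HL HN c0) c e
                     | or_intror H' => F cs' c H' end
       end) cs)
  end.

Lemma label_node N (cs : seq (mtree N)) :
  label (MNode cs) = \big[@setU _/set0]_(c <- cs) label c.
Proof. by elim: cs => [|c cs IH] /=; rewrite ?big_nil ?big_cons // -IH. Qed.

Lemma leaves_node N (cs : seq (mtree N)) :
  leaves (MNode cs) = flatten (map (@leaves N) cs).
Proof. by elim: cs => [|c cs IH] //=; rewrite -IH. Qed.

Lemma subtrees_node N (cs : seq (mtree N)) :
  subtrees (MNode cs) = MNode cs :: flatten (map (@subtrees N) cs).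
Proof. by elim: cs => [|c cs IH] //=; case: IH => ->. Qed.

Lemma nodes_node N (Rk : {set 'I_N} -> nat) (cs : seq (mtree N)) p :
  nodes_pa Rk (MNode cs) p = (MNode cs, p) ::
     flatten (map (fun c => nodes_pa Rk c (Rk (label (MNode cs)))) cs).
Proof.
rewrite [LHS]/=; congr (_ :: _); move: (Rk (label (MNode cs))) => K.
by elim: cs => [|c cs IH] //=; rewrite IH.
Qed.

Lemma tens_node N R (Rk : {set 'I_N} -> nat) W (cs : seq (mtree N)) i r :
  tens (R:=R) Rk W (MNode cs) i r = \sum_(r' < Rk (label (MNode cs)))
     W (label (MNode cs)) r' r * \prod_(c <- cs) tens Rk W c i r'.
Proof.
apply: eq_bigr => r' _; congr (_ * _); move: (nat_of_ord r') => k; clear r'.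
by elim: cs => [|c cs IH] /=; rewrite ?big_nil ?big_cons // IH.
Qed.

Definition ordD N (D : 'I_N -> nat) (hD : forall n, (0 < D n)%N) n (k : nat) : 'I_(D n) :=
  insubd (Ordinal (hD n)) k.

Definition mk N (D : 'I_N -> nat) (hD : forall n, (0 < D n)%N) (S : {set 'I_N})
  (f : 'I_N -> nat) : idx D S :=
  finfun (fun x : {x : 'I_N | x \in S} => ordD hD (val x) (f (val x))).

Lemma ext_in N (D : 'I_N -> nat) S (j : idx D S) x : ext j (val x) = j x.
Proof. by rewrite /ext valK. Qed.

Lemma ext_out N (D : 'I_N -> nat) S (j : idx D S) n : n \notin S -> ext j n = 0%N.
Proof. by move=> nS; rewrite /ext insubN. Qed.

Lemma ext_lt N (D : 'I_N -> nat) (hD : forall n, (0 < D n)%N) S (j : idx D S) n :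
  (ext j n < D n)%N.
Proof. rewrite /ext; case: insubP => [x _ <-|_]; [exact: ltn_ord | exact: hD]. Qed.

Lemma ext_inj N (D : 'I_N -> nat) S (j j' : idx D S) : ext j =1 ext j' -> j = j'.
Proof. by move=> e; apply/ffunP => x; apply: val_inj; rewrite /= -!ext_in. Qed.

Lemma ext_mk N (D : 'I_N -> nat) (hD : forall n, (0 < D n)%N) S f n :
  ext (mk hD S f) n = if n \in S then (if (f n < D n)%N then f n else 0%N) else 0%N.
Proof.
rewrite /ext; case: insubP => [x xS <-|nS]; last by rewrite (negbTE nS).
rewrite ffunE /ordD val_insubd /=; by case: x xS => /= m ->.
Qed.

Lemma sum_idx_split N (R : realType) (D : 'I_N -> nat) (hD : forall n, (0 < D n)%N)
  (A B : {set 'I_N}) (H1 H2 : ('I_N -> nat) -> R) :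
  [disjoint A & B] ->
  (forall i i', {in A, i =1 i'} -> H1 i = H1 i') ->
  (forall i i', {in B, i =1 i'} -> H2 i = H2 i') ->
  \sum_(j : idx D (A :|: B)) H1 (ext j) * H2 (ext j) =
  (\sum_(a : idx D A) H1 (ext a)) * (\sum_(b : idx D B) H2 (ext b)).
Proof.
move=> dAB h1 h2.
pose p (ab : idx D A * idx D B) : idx D (A :|: B) :=
  mk hD (A :|: B) (fun n => if n \in A then ext ab.1 n else ext ab.2 n).
pose q (j : idx D (A :|: B)) := (mk hD A (ext j), mk hD B (ext j)).
have extp ab n : ext (p ab) n =
    if n \in A then ext ab.1 n else if n \in B then ext ab.2 n else 0%N.
  rewrite ext_mk inE; case nA: (n \in A); first by rewrite /= ext_lt.
  by case nB: (n \in B) => //=; rewrite ext_lt.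
have pK : cancel q p.
  move=> j; apply: ext_inj => n; rewrite extp /= !ext_mk.
  case nA: (n \in A); first by rewrite ext_lt.
  case nB: (n \in B); first by rewrite ext_lt.
  by rewrite ext_out // inE nA nB.
have qK : cancel p q.
  case=> a b; congr pair; apply: ext_inj => n; rewrite ext_mk extp /=.
    case nA: (n \in A); first by rewrite ext_lt.
    by rewrite ext_out // nA.
  case nB: (n \in B); last by rewrite ext_out // nB.
  by rewrite (disjointFl dAB nB) ext_lt.
rewrite (reindex p) /=; last by exists q => ? _; [apply: qK | apply: pK].
rewrite -(pair_big xpredT xpredT (fun a b => H1 (ext (p (a, b))) * H2 (ext (p (a, b))))) /=.
rewrite mulr_suml; apply: eq_bigr => a _; rewrite mulr_sumr; apply: eq_bigr => b _.
congr (_ * _).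
  by apply: h1 => n nA; rewrite extp nA.
by apply: h2 => n nB; rewrite extp (disjointFl dAB nB) nB.
Qed.

Lemma label_sub N (cs : seq (mtree N)) c :
  List.In c cs -> label c \subset label (MNode cs).
Proof.
rewrite label_node; elim: cs => [|c0 cs IH] //= [<-|H]; rewrite big_cons.
  exact: subsetUl.
exact: subset_trans (IH H) (subsetUr _ _).
Qed.

Lemma tens_local N (R : realType) (Rk : {set 'I_N} -> nat) W (t : mtree N) :
  forall i i' r, {in label t, i =1 i'} -> tens (R:=R) Rk W t i r = tens Rk W t i' r.
Proof.
elim/mtree_ind': t => [n|cs IH] i i' r e.
  by rewrite /= e // inE.
rewrite !tens_node; apply: eq_bigr => r' _; congr (_ * _).
move: (nat_of_ord r') => k; clear r'.
have H c : List.In c cs -> tens Rk W c i k = tens Rk W c i' k.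
  move=> cin; apply: IH => // x xc; apply: e; exact: (subsetP (label_sub cin)).
elim: cs {IH e} H => [|c cs IHc] H; rewrite ?big_nil ?big_cons //.
rewrite H /=; last by left.
by rewrite IHc // => c' c'in; apply: H; right.
Qed.

Lemma label_leaves N (t : mtree N) x : (x \in label t) = (x \in leaves t).
Proof.
elim/mtree_ind': t => [n|cs IH]; first by rewrite inE mem_seq1.
rewrite label_node leaves_node.
elim: cs IH => [|c cs IHc] IH; first by rewrite big_nil inE.
rewrite big_cons inE /= mem_cat IH /=; last by left.
by rewrite IHc // => c' c'in; apply: IH; right.
Qed.

Lemma In_cat T (x : T) (s1 s2 : seq T) : List.In x (s1 ++ s2) -> List.In x s1 \/ List.In x s2.
Proof.
elim: s1 => [|y s1 IH] /=; first by right.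
case=> [e|H]; first by left; left.
by case: (IH H) => H'; [left; right | right].
Qed.

Lemma In_catl T (x : T) (s1 s2 : seq T) : List.In x s1 -> List.In x (s1 ++ s2).
Proof.
elim: s1 => [|y s1 IH] //= [e|H]; first by left.
by right; apply: IH.
Qed.

Lemma In_catr T (x : T) (s1 s2 : seq T) : List.In x s2 -> List.In x (s1 ++ s2).
Proof. elim: s1 => [|y s1 IH] //= H; by right; apply: IH. Qed.

Lemma In_flatten T U (f : U -> seq T) (l : seq U) x :
  List.In x (flatten (map f l)) -> exists y, List.In y l /\ List.In x (f y).
Proof.
elim: l => [|y l IH] //= H0; case: (In_cat H0) => [H|/IH [z [zl xz]]].
  by exists y; split=> //; left.
by exists z; split=> //; right.
Qed.

Lemma In_flatten' T U (f : U -> seq T) (l : seq U) x y :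
  List.In y l -> List.In x (f y) -> List.In x (flatten (map f l)).
Proof.
elim: l => [|z l IH] //= [->|yl] H; first exact: In_catl.
by apply: In_catr; apply: IH.
Qed.

Lemma nodes_sub N (Rk : {set 'I_N} -> nat) (T : mtree N) :
  forall nu p pa, List.In (nu, pa) (nodes_pa Rk T p) -> List.In nu (subtrees T).
Proof.
elim/mtree_ind': T => [n|cs IH] nu p pa.
  by case=> // -[<- _]; left.
rewrite nodes_node subtrees_node /= => -[[->]|]; first by left.
move=> H0; case: (In_flatten H0) => c [cin H]; right.
by apply: (In_flatten' (f := @subtrees N) cin); apply: (IH c cin nu _ pa H).
Qed.

Lemma uniq_flatten_In (T : eqType) U (f : U -> seq T) (l : seq U) y :
  uniq (flatten (map f l)) -> List.In y l -> uniq (f y).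
Proof.
elim: l => [|z l IH] //=; rewrite cat_uniq => /and3P [uz _ ul] [<-|yl] //.
exact: IH.
Qed.

Lemma uniq_sub N (T : mtree N) :
  forall t, List.In t (subtrees T) -> uniq (leaves T) -> uniq (leaves t).
Proof.
elim/mtree_ind': T => [n|cs IH] t.
  by case=> // <-.
rewrite subtrees_node leaves_node => -[<-|] //; first by rewrite leaves_node.
move=> H0; case: (In_flatten H0) => c [cin H] u.
apply: (IH c cin t H); exact: (uniq_flatten_In u cin).
Qed.

Lemma CS (R : realType) (K : nat) (a b : 'I_K -> R) :
  (\sum_i a i * b i) ^+ 2 <= (\sum_i a i ^+ 2) * (\sum_i b i ^+ 2).
Proof.
have h : 0 <= \sum_i \sum_j (a i * b j - a j * b i) ^+ 2.
  by apply: sumr_ge0 => i _; apply: sumr_ge0 => j _; exact: sqr_ge0.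
have e1 : (\sum_i a i ^+ 2) * (\sum_i b i ^+ 2) = \sum_i \sum_j a i ^+ 2 * b j ^+ 2.
  by rewrite mulr_suml; apply: eq_bigr => i _; rewrite mulr_sumr.
have e2 : (\sum_i a i ^+ 2) * (\sum_i b i ^+ 2) = \sum_i \sum_j a j ^+ 2 * b i ^+ 2.
  by rewrite e1 exchange_big.
have e3 : (\sum_i a i * b i) ^+ 2 = \sum_i \sum_j (a i * b i) * (a j * b j).
  by rewrite expr2 mulr_suml; apply: eq_bigr => i _; rewrite mulr_sumr.
have e : \sum_i \sum_j (a i * b j - a j * b i) ^+ 2 =
   \sum_i \sum_j a i ^+ 2 * b j ^+ 2 + \sum_i \sum_j a j ^+ 2 * b i ^+ 2
   - 2 * \sum_i \sum_j (a i * b i) * (a j * b j).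
  rewrite mulr_sumr -!big_split -sumrB /=; apply: eq_bigr => i _.
  rewrite mulr_sumr -!big_split -sumrB /=; apply: eq_bigr => j _.
  ring.
rewrite e -e1 -e2 -e3 in h; lra.
Qed.

Lemma big_In_eq (R : realType) X (cs : seq X) (f g : X -> R) :
  (forall c, List.In c cs -> f c = g c) -> \prod_(c <- cs) f c = \prod_(c <- cs) g c.
Proof.
elim: cs => [|c cs IH] H; rewrite ?big_nil ?big_cons //.
by rewrite H /=; [rewrite IH // => c' h; apply: H; right | left].
Qed.

Lemma prod_sqrt (R : realType) X (cs : seq X) (f : X -> R) :
  (forall c, 0 <= f c) -> \prod_(c <- cs) Num.sqrt (f c) = Num.sqrt (\prod_(c <- cs) f c).
Proof.
move=> h; elim: cs => [|c cs IH]; rewrite ?big_nil ?big_cons ?sqrtr1 //.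
by rewrite sqrtrM // IH.
Qed.

Lemma sum_prod_le (R : realType) X (K : nat) (cs : seq X) (f : X -> 'I_K -> R) :
  cs <> [::] -> (forall c k, 0 <= f c k) ->
  \sum_k \prod_(c <- cs) f c k <= \prod_(c <- cs) \sum_k f c k.
Proof.
move=> + h; elim: cs => [|c cs IH] // _.
case: cs IH => [|c' cs] IH.
  by rewrite big_cons big_nil mulr1; under eq_bigr do rewrite big_cons big_nil mulr1.
rewrite big_cons.
set P := fun k => \prod_(c0 <- c' :: cs) f c0 k.
have -> : \sum_k \prod_(c0 <- [:: c, c' & cs]) f c0 k = \sum_k f c k * P k.
  by apply: eq_bigr => k _; rewrite big_cons.
have P0 k : 0 <= P k by apply: prodr_ge0 => *.
apply: (@le_trans _ _ (\sum_k f c k * \sum_k' P k')).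
  apply: ler_sum => k _; apply: ler_wpM2l => //.
  rewrite (bigD1 k) //= lerDl; exact: sumr_ge0.
rewrite -mulr_suml; apply: ler_wpM2l; first exact: sumr_ge0.
exact: IH.
Qed.

Lemma sum_prod_children N (R : realType) (D : 'I_N -> nat) (hD : forall n, (0 < D n)%N)
  (Rk : {set 'I_N} -> nat) (W : {set 'I_N} -> nat -> nat -> R) (cs : seq (mtree N)) (k : nat) :
  uniq (flatten (map (@leaves N) cs)) ->
  \sum_(j : idx D (label (MNode cs))) \prod_(c <- cs) (tens Rk W c (ext j) k) ^+ 2
  = \prod_(c <- cs) \sum_(j : idx D (label c)) (tens Rk W c (ext j) k) ^+ 2.
Proof.
elim: cs => [|c cs IH] u.
  rewrite big_nil.
  pose j0 := mk hD (label (MNode [::])) (fun _ => 0%N).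
  rewrite (eq_bigl (fun j => j == j0)) ?big_pred1_eq ?big_nil // => j.
  have -> : j = j0 by apply: ext_inj => n; rewrite !ext_out // inE.
  by rewrite eqxx.
have -> : label (MNode (c :: cs)) = label c :|: label (MNode cs) by [].
move: u; rewrite /= cat_uniq => /and3P [uc hn ucs].
rewrite (eq_bigr (fun j : idx D (label c :|: label (MNode cs)) =>
   tens Rk W c (ext j) k ^+ 2 * \prod_(c0 <- cs) tens Rk W c0 (ext j) k ^+ 2));
  last by move=> j _; rewrite big_cons.
rewrite (sum_idx_split hD (H1 := fun i => tens Rk W c i k ^+ 2)
   (H2 := fun i => \prod_(c0 <- cs) tens Rk W c0 i k ^+ 2)).
- by rewrite big_cons IH.
- rewrite disjoints_subset; apply/subsetP => x xc; rewrite inE; apply/negP => xcs.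
  move: xc xcs; rewrite !label_leaves leaves_node => xc xcs.
  by move/hasP: hn; apply; exists x.
- by move=> i i' e /=; rewrite (tens_local _ _ _ e).
move=> i i' e /=; apply: big_In_eq => c0 c0in.
congr (_ ^+ 2); apply: tens_local => x xc0; apply: e.
exact: (subsetP (label_sub c0in)).
Qed.

Unset Implicit Arguments.
Set Strict Implicit.

Theorem lemma8 (R : realType) (N : nat) (D : 'I_N -> nat)
  (Rk : {set 'I_N} -> nat) (W : {set 'I_N} -> nat -> nat -> R)
  (T : mtree N) (hT : is_mode_tree T)
  (hD : forall n : 'I_N, (0 < D n)%N)
  (hRk : forall t : mtree N, List.In t (subtrees T) -> is_interior t ->
         (0 < Rk (label t))%N)
  (nu : mtree N) (pa : nat) (hnu : List.In (nu, pa) (nodes Rk T))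
  (hint : is_interior nu) :
  stack_norm D (label nu) pa (tens Rk W nu) <=
  mat_norm (rank D Rk nu) pa (W (label nu)) *
  \prod_(c <- children nu)
     stack_norm D (label c) (rank D Rk nu) (tens Rk W c).
Proof.
case: nu hnu hint => [n|cs] hnu hint //.
have nsub := nodes_sub hnu.
case: hT => hperm hch _.
have csne : cs <> [::] by exact: (hch _ nsub).
have u : uniq (leaves (MNode cs)).
  apply: (uniq_sub nsub); rewrite (perm_uniq hperm); exact: enum_uniq.
rewrite leaves_node in u.
rewrite /stack_norm /mat_norm.
have -> : children (MNode cs) = cs by [].
have -> : rank D Rk (MNode cs) = Rk (label (MNode cs)) by [].
rewrite prod_sqrt; last first.
  by move=> c; apply: sumr_ge0 => j _; apply: sumr_ge0 => r _; exact: sqr_ge0.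
rewrite -sqrtrM; last by apply: sumr_ge0 => j _; apply: sumr_ge0 => r _; exact: sqr_ge0.
rewrite ler_sqrt; last first.
  apply: mulr_ge0; first by apply: sumr_ge0 => j _; apply: sumr_ge0 => r _; exact: sqr_ge0.
  apply: prodr_ge0 => c _; apply: sumr_ge0 => j _; apply: sumr_ge0 => r _; exact: sqr_ge0.
set K := Rk (label (MNode cs)).
set P := fun (j : idx D (label (MNode cs))) (r' : 'I_K) =>
  \prod_(c <- cs) tens Rk W c (ext j) r'.
apply: (@le_trans _ _ (\sum_(j : idx D (label (MNode cs))) \sum_(r < pa)
   (\sum_(r' < K) W (label (MNode cs)) r' r ^+ 2) * (\sum_(r' < K) P j r' ^+ 2))).
  apply: ler_sum => j _; apply: ler_sum => r _; rewrite tens_node; exact: CS.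
rewrite [X in _ <= X * _]exchange_big /=.
rewrite (eq_bigr (fun j => (\sum_(r < pa) \sum_(r' < K) W (label (MNode cs)) r' r ^+ 2) *
   (\sum_(r' < K) P j r' ^+ 2))); last by move=> j _; rewrite mulr_suml.
rewrite -mulr_sumr; apply: ler_wpM2l.
  by apply: sumr_ge0 => j _; apply: sumr_ge0 => r _; exact: sqr_ge0.
rewrite exchange_big /=.
rewrite (eq_bigr (fun r' : 'I_K => \prod_(c <- cs) \sum_(j : idx D (label c))
     (tens Rk W c (ext j) r') ^+ 2)); last first.
  move=> r' _; rewrite -sum_prod_children //; apply: eq_bigr => j _.
  by rewrite /P prodrXl.
apply: le_trans (sum_prod_le (f := fun c (r : 'I_K) =>
   \sum_(j : idx D (label c)) (tens Rk W c (ext j) r) ^+ 2) csne _) _.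
  by move=> c r; apply: sumr_ge0 => j _; exact: sqr_ge0.
rewrite le_eqVlt; apply/orP; left; apply/eqP.
by apply: eq_bigr => c _; rewrite exchange_big.
Qed.
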